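(* Let $\mathbf z=(z_1,z_2,z_3)\in\mathbb{R}^3$ with $z_2>0$ and $z_3>0$, and let $\Lambda^*$ be as defined in the context. Then $$\Lambda^*(\mathbf z)=\ln\pi+\sup_{\lambda_1\neq 0,\ \beta>1}\Big\{\tfrac{z_2}{2}+\tfrac{z_3}{2}+\lambda_1z_1-|\lambda_1|\beta\sqrt{z_2z_3}+\tfrac12\ln(\beta^2-1)+\ln|\lambda_1|-\ln\Big(\pi+2\arctan\Big(\tfrac{\lambda_1}{|\lambda_1|\sqrt{\beta^2-1}}\Big)\Big)\Big\}.$$
   Context: For $\boldsymbol\lambda=(\lambda_1,\lambda_2,\lambda_3)\in\mathbb{R}^3$ let $D=\lambda_1^2-(1-2\lambda_2)(1-2\lambda_3)$, and let $$S=\{\boldsymbol\lambda:\lambda_2<\tfrac12,\ \lambda_3<\tfrac12,\ D<0\}.$$ For $\boldsymbol\lambda\in S$ put $$\Lambda(\boldsymbol\lambda)=\ln\left(\pi+2\arctan\left(\frac{\lambda_1}{\sqrt{-D}}\right)\right)-\ln\pi-\tfrac12\ln(-D).$$ This is the logarithmic moment generating function $\ln\mathbb{E}[\exp(\lambda_1\hat X\hat Y+\lambda_2\hat X^2+\lambda_3\hat Y^2)]$ for independent half-normal $\hat X,\hat Y$. The Fenchel–Legendre transform is $$\Lambda^*(\mathbf z)=\sup_{\boldsymbol\lambda\in S}\{\langle\boldsymbol\lambda,\mathbf z\rangle-\Lambda(\boldsymbol\lambda)\}.$$ *)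

(* Defs.v *)
From Stdlib Require Import Reals.
From Coquelicot Require Import Coquelicot.
Open Scope R_scope.

Definition Dlam (l1 l2 l3 : R) : R := l1 ^ 2 - (1 - 2 * l2) * (1 - 2 * l3).

Definition inS (l1 l2 l3 : R) : Prop :=
  l2 < 1 / 2 /\ l3 < 1 / 2 /\ Dlam l1 l2 l3 < 0.

Definition Lam (l1 l2 l3 : R) : R :=
  ln (PI + 2 * atan (l1 / sqrt (- Dlam l1 l2 l3))) - ln PI
  - (1 / 2) * ln (- Dlam l1 l2 l3).

Definition LamStar (z1 z2 z3 : R) : Rbar :=
  Lub_Rbar (fun y => exists l1 l2 l3, inS l1 l2 l3 /\
                       y = l1 * z1 + l2 * z2 + l3 * z3 - Lam l1 l2 l3).

Definition Phi (z1 z2 z3 l1 b : R) : R :=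
  z2 / 2 + z3 / 2 + l1 * z1 - Rabs l1 * b * sqrt (z2 * z3)
  + (1 / 2) * ln (b ^ 2 - 1) + ln (Rabs l1)
  - ln (PI + 2 * atan (l1 / (Rabs l1 * sqrt (b ^ 2 - 1)))).

(* Main.v *)
Require Import Defs.
From Stdlib Require Import Reals Lra.
From Coquelicot Require Import Coquelicot.
Open Scope R_scope.

Lemma amgm X Y : 0 <= X -> 0 <= Y -> sqrt (X * Y) <= (X + Y) / 2.
Proof.
  intros hX hY. rewrite sqrt_mult_alt by lra.
  pose proof (sqrt_sqrt X hX). pose proof (sqrt_sqrt Y hY).
  rewrite <- H at 2. rewrite <- H0 at 2.
  pose proof (pow2_ge_0 (sqrt X - sqrt Y)). nra.
Qed.

Lemma ln_sq x : x <> 0 -> ln (x ^ 2) = 2 * ln (Rabs x).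
Proof.
  intro h. rewrite <- pow2_abs. simpl. rewrite Rmult_1_r.
  assert (0 < Rabs x) by (apply Rabs_pos_lt; auto).
  rewrite ln_mult by auto. ring.
Qed.

Lemma sqrt_sq x : sqrt (x ^ 2) = Rabs x.
Proof. rewrite <- sqrt_Rsqr_abs. f_equal. unfold Rsqr. ring. Qed.

Lemma K1 z1 z2 z3 l1 l2 l3 : 0 < z2 -> 0 < z3 -> l1 <> 0 -> inS l1 l2 l3 ->
  exists b, 1 < b /\
   l1 * z1 + l2 * z2 + l3 * z3 - Lam l1 l2 l3 <= ln PI + Phi z1 z2 z3 l1 b.
Proof.
  intros h2 h3 hl [hl2 [hl3 hD]].
  unfold Dlam in hD.
  set (a := 1 - 2 * l2) in *. set (c := 1 - 2 * l3) in *.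
  assert (ha : 0 < a) by (unfold a; lra).
  assert (hc : 0 < c) by (unfold c; lra).
  set (u := - (l1 ^ 2 - a * c)).
  assert (hu : 0 < u) by (unfold u; lra).
  assert (hl1 : 0 < l1 ^ 2) by (apply pow2_gt_0; auto).
  assert (hA : 0 < Rabs l1) by (apply Rabs_pos_lt; auto).
  assert (hq : 0 < u / l1 ^ 2) by (apply Rdiv_lt_0_compat; auto).
  exists (sqrt (1 + u / l1 ^ 2)).
  split.
  { pattern 1 at 1; rewrite <- sqrt_1. apply sqrt_lt_1_alt. lra. }
  assert (E1 : sqrt (1 + u / l1 ^ 2) ^ 2 - 1 = u / l1 ^ 2).
  { rewrite pow2_sqrt by lra. ring. }
  assert (E2 : Rabs l1 * sqrt (1 + u / l1 ^ 2) = sqrt (a * c)).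
  { rewrite <- sqrt_sq, <- sqrt_mult_alt by lra. f_equal. unfold u. field. auto. }
  assert (E3 : sqrt (u / l1 ^ 2) = sqrt u / Rabs l1).
  { rewrite sqrt_div_alt by auto. rewrite sqrt_sq. auto. }
  assert (E4 : ln (u / l1 ^ 2) = ln u - 2 * ln (Rabs l1)).
  { rewrite ln_div by auto. rewrite ln_sq by auto. ring. }
  assert (hsu : 0 < sqrt u) by (apply sqrt_lt_R0; auto).
  assert (E5 : l1 / (Rabs l1 * (sqrt u / Rabs l1)) = l1 / sqrt u).
  { field. lra. }
  assert (AM : sqrt (a * c) * sqrt (z2 * z3) <= (a * z2 + c * z3) / 2).
  { rewrite <- sqrt_mult_alt by nra. 
    replace (a * c * (z2 * z3)) with ((a * z2) * (c * z3)) by ring.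
    apply amgm; nra. }
  unfold Phi, Lam, Dlam. fold a c. fold u.
  rewrite E1, E2, E3, E4, E5.
  replace l2 with ((1 - a) / 2) by (unfold a; field).
  replace l3 with ((1 - c) / 2) by (unfold c; field).
  lra.
Qed.

Lemma K2 z1 z2 z3 l1 b : 0 < z2 -> 0 < z3 -> l1 <> 0 -> 1 < b ->
  exists l2 l3, inS l1 l2 l3 /\
   l1 * z1 + l2 * z2 + l3 * z3 - Lam l1 l2 l3 = ln PI + Phi z1 z2 z3 l1 b.
Proof.
  intros h2 h3 hl hb.
  assert (hs2 : 0 < sqrt z2) by (apply sqrt_lt_R0; auto).
  assert (hs3 : 0 < sqrt z3) by (apply sqrt_lt_R0; auto).
  assert (E2 : z2 = sqrt z2 * sqrt z2) by (symmetry; apply sqrt_sqrt; lra).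
  assert (E3 : z3 = sqrt z3 * sqrt z3) by (symmetry; apply sqrt_sqrt; lra).
  revert hs2 hs3 E2 E3. generalize (sqrt z2) (sqrt z3). intros s2 s3 hs2 hs3 E2 E3.
  subst z2 z3.
  assert (hA : 0 < Rabs l1) by (apply Rabs_pos_lt; auto).
  assert (hl1 : 0 < l1 ^ 2) by (apply pow2_gt_0; auto).
  set (k := Rabs l1 * b).
  assert (hk : 0 < k) by (unfold k; nra).
  set (a := k * s3 / s2). set (c := k * s2 / s3).
  assert (ha : 0 < a) by (unfold a; apply Rdiv_lt_0_compat; nra).
  assert (hc : 0 < c) by (unfold c; apply Rdiv_lt_0_compat; nra).
  assert (hb2 : 0 < b ^ 2 - 1) by nra.
  assert (ED : - Dlam l1 ((1 - a) / 2) ((1 - c) / 2) = l1 ^ 2 * (b ^ 2 - 1)).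
  { unfold Dlam, a, c, k. rewrite <- (pow2_abs l1). field. lra. }
  exists ((1 - a) / 2), ((1 - c) / 2).
  split.
  { unfold inS. split; [lra|]. split; [lra|]. nra. }
  unfold Lam, Phi. rewrite ED.
  rewrite sqrt_mult_alt by lra. rewrite sqrt_sq.
  rewrite ln_mult by auto. rewrite ln_sq by auto.
  replace (s2 * s2 * (s3 * s3)) with ((s2 * s3) ^ 2) by ring.
  rewrite sqrt_sq. rewrite (Rabs_right (s2 * s3)) by nra.
  fold k.
  assert (Ea : a * (s2 * s2) = k * (s2 * s3)) by (unfold a; field; lra).
  assert (Ec : c * (s3 * s3) = k * (s2 * s3)) by (unfold c; field; lra).
  clearbody a c k.   replace (((1 - a) / 2) * (s2 * s2)) with (s2 * s2 / 2 - a * (s2 * s2) / 2) by lra.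
  replace (((1 - c) / 2) * (s3 * s3)) with (s3 * s3 / 2 - c * (s3 * s3) / 2) by lra.
  rewrite Ea, Ec. lra.
Qed.
Lemma K3 z1 z2 z3 l2 l3 eps : 0 < (1-2*l2)*(1-2*l3) -> 0 < eps ->
  exists t, t <> 0 /\ t ^ 2 < (1-2*l2)*(1-2*l3) /\
   (0 * z1 + l2 * z2 + l3 * z3 - Lam 0 l2 l3) - eps <
   t * z1 + l2 * z2 + l3 * z3 - Lam t l2 l3.
Proof.
  intros hp he.
  set (gg :=  fun (t : R) => t * z1 + l2 * z2 + l3 * z3 - Lam t l2 l3).
  assert (Hd : ex_derive gg 0).
  { unfold gg, Lam, Dlam. auto_derive. repeat split; try lra.
    - apply Rgt_not_eq, sqrt_lt_R0. lra.
    - replace (0 * / sqrt (- (0 * (0 * 1) + - ((1 - 2 * l2) * (1 - 2 * l3))))) with 0 by ring.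
      rewrite atan_0. pose proof PI_RGT_0. lra. }
  pose proof (ex_derive_continuous gg 0 Hd) as Hc.
  apply filterlim_locally with (eps := mkposreal eps he) in Hc.
  destruct Hc as [d Hd'].
  set (s := sqrt ((1-2*l2)*(1-2*l3))).
  assert (hs : 0 < s) by (apply sqrt_lt_R0; lra).
  assert (hs2 : s * s = (1-2*l2)*(1-2*l3)) by (apply sqrt_sqrt; lra).
  pose proof (cond_pos d) as hd.
  set (t := Rmin (d/2) (s/2)).
  assert (ht0 : 0 < t) by (apply Rmin_pos; lra).
  assert (ht1 : t <= d/2) by apply Rmin_l.
  assert (ht2 : t <= s/2) by apply Rmin_r.
  exists t. split; [lra|]. split; [nra|].
  specialize (Hd' t).
  assert (hb : ball 0 d t).
  { unfold ball; simpl; unfold AbsRing_ball, abs, minus, plus, opp; simpl.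
    rewrite Rabs_right; lra. }
  specialize (Hd' hb).
  unfold ball in Hd'; simpl in Hd'; unfold AbsRing_ball, abs, minus, plus, opp in Hd'; simpl in Hd'.
  apply Rabs_def2 in Hd'. unfold gg in Hd'. simpl in Hd'. lra.
Qed.

Theorem lemma8 (z1 z2 z3 : R) (hz2 : 0 < z2) (hz3 : 0 < z3) :
  LamStar z1 z2 z3 =
  Rbar_plus (Finite (ln PI))
    (Lub_Rbar (fun y => exists l1 b, l1 <> 0 /\ 1 < b /\ y = Phi z1 z2 z3 l1 b)).
Proof.
  unfold LamStar.
  set (B := fun y => exists l1 b, l1 <> 0 /\ 1 < b /\ y = Phi z1 z2 z3 l1 b).
  set (A := fun y => exists l1 l2 l3, inS l1 l2 l3 /\
                       y = l1 * z1 + l2 * z2 + l3 * z3 - Lam l1 l2 l3).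
  apply is_lub_Rbar_unique.
  pose proof (Lub_Rbar_correct B) as [HL1 HL2].
  assert (HB : B (Phi z1 z2 z3 1 2)) by (exists 1, 2; repeat split; lra).
  assert (HAB : forall y, B y -> A (ln PI + y)).
  { intros y [l1 [b [h1 [h2 ->]]]].
    destruct (K2 z1 z2 z3 l1 b hz2 hz3 h1 h2) as [l2 [l3 [hS E]]].
    exists l1, l2, l3. split; auto. }
  assert (HA : A (ln PI + Phi z1 z2 z3 1 2)) by (apply HAB; auto).
  assert (Hleast : forall r, is_ub_Rbar A (Finite r) -> is_ub_Rbar B (Finite (r - ln PI))).
  { intros r Hr y Hy. specialize (Hr _ (HAB y Hy)). simpl in *. lra. }
  destruct (Lub_Rbar B) as [l| |] eqn:EL.
  - simpl. split.
    + intros x [l1 [l2 [l3 [hS ->]]]].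
      assert (Hgen : forall m1, m1 <> 0 -> inS m1 l2 l3 ->
                m1 * z1 + l2 * z2 + l3 * z3 - Lam m1 l2 l3 <= ln PI + l).
      { intros m1 hm hSm.
        destruct (K1 z1 z2 z3 m1 l2 l3 hz2 hz3 hm hSm) as [b [hb E]].
        assert (HBb : B (Phi z1 z2 z3 m1 b)) by (exists m1, b; auto).
        specialize (HL1 _ HBb). simpl in HL1. simpl. lra. }
      simpl.
      destruct (Req_dec l1 0) as [e|n]; [|apply Hgen; auto].
      subst l1.
      destruct hS as [h2 [h3 hD]]. unfold Dlam in hD.
      apply Rnot_lt_le. intro Hlt.
      set (x := 0 * z1 + l2 * z2 + l3 * z3 - Lam 0 l2 l3) in *.
      assert (hp : 0 < (1 - 2 * l2) * (1 - 2 * l3)) by nra.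
      destruct (K3 z1 z2 z3 l2 l3 ((x - (ln PI + l)) / 2) hp ltac:(lra)) as [t [ht [ht2 Ht]]].
      assert (hSt : inS t l2 l3) by (unfold inS, Dlam; repeat split; lra).
      specialize (Hgen t ht hSt). fold x in Ht. lra.
    + intros b Hb. destruct b as [r| |]; simpl; auto.
      * specialize (HL2 _ (Hleast r Hb)). simpl in HL2. lra.
      * specialize (Hb _ HA). simpl in Hb. auto.
  - simpl. split.
    + intros x _. simpl. auto.
    + intros b Hb. destruct b as [r| |]; simpl; auto.
      * specialize (HL2 _ (Hleast r Hb)). simpl in HL2. auto.
      * specialize (Hb _ HA). simpl in Hb. auto.
  - specialize (HL1 _ HB). simpl in HL1. contradiction.
Qed.
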